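(* Let $S$ be an intra-regular $\Gamma$-AG$^{**}$-groupoid and let $B$ be a $\Gamma$-bi-ideal (or a $\Gamma$-generalized bi-ideal) of $S$. Then $(B\Gamma S)\Gamma B=B\cap S=B$.
   Context: Let $S$ and $\Gamma$ be nonempty sets with a map $S\times\Gamma\times S\to S$, $(x,\gamma,y)\mapsto x\gamma y$. $S$ is a $\Gamma$-AG-groupoid if $(x\gamma y)\delta z=(z\gamma y)\delta x$ for all $x,y,z\in S$, $\gamma,\delta\in\Gamma$; it is a $\Gamma$-AG$^{**}$-groupoid if moreover $a\alpha(b\beta c)=b\alpha(a\beta c)$ for all $a,b,c\in S$, $\alpha,\beta\in\Gamma$. For subsets $A,B\subseteq S$, $A\Gamma B=\{a\gamma b: a\in A,\gamma\in\Gamma,b\in B\}$. $S$ is intra-regular if for every $a\in S$ there exist $x,y\in S$ and $\beta,\gamma,\delta\in\Gamma$ with $a=(x\beta(a\delta a))\gamma y$. A nonempty subset $B\subseteq S$ is a $\Gamma$-generalized bi-ideal if $(B\Gamma S)\Gamma B\subseteq B$, and a $\Gamma$-bi-ideal if in addition $B\Gamma B\subseteq B$. *)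

(* Defs.v *)
Set Implicit Arguments.

Definition GammaAG {S G : Type} (op : S -> G -> S -> S) : Prop :=
  forall (x y z : S) (g d : G), op (op x g y) d z = op (op z g y) d x.

Definition GammaAGss {S G : Type} (op : S -> G -> S -> S) : Prop :=
  GammaAG op /\
  forall (a b c : S) (al be : G), op a al (op b be c) = op b al (op a be c).

Definition intra_regular {S G : Type} (op : S -> G -> S -> S) : Prop :=
  forall a : S, exists (x y : S) (be ga de : G),
    a = op (op x be (op a de a)) ga y.

Definition setG {S G : Type} (op : S -> G -> S -> S) (A B : S -> Prop) : S -> Prop :=
  fun z => exists a g b, A a /\ B b /\ z = op a g b.

Definition fullset {S : Type} : S -> Prop := fun _ => True.

Definition set_inter {S : Type} (A B : S -> Prop) : S -> Prop := fun x => A x /\ B x.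

Definition set_eq {S : Type} (A B : S -> Prop) : Prop := forall x, A x <-> B x.

Definition set_sub {S : Type} (A B : S -> Prop) : Prop := forall x, A x -> B x.

Definition gen_bi_ideal {S G : Type} (op : S -> G -> S -> S) (B : S -> Prop) : Prop :=
  (exists b, B b) /\ set_sub (setG op (setG op B fullset) B) B.

Definition bi_ideal {S G : Type} (op : S -> G -> S -> S) (B : S -> Prop) : Prop :=
  gen_bi_ideal op B /\ set_sub (setG op B B) B.

(* Main.v *)
Require Import Defs.

Lemma key (S G : Type) (op : S -> G -> S -> S) (hAG : GammaAGss op)
  (hir : intra_regular op) (b : S) :
  exists s g1 g2, b = op (op b g1 s) g2 b.
Proof.
  destruct hAG as [LI AG].
  destruct (hir b) as [x [y [be [ga [de hb]]]]].
  exists (op (op x be (op b de y)) de (op x ga y)), be, ga.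
  pose proof (AG x b b be de).
  pose proof (LI b (op x de b) y be ga).
  pose proof (AG x (op x be (op b de b)) y de ga).
  pose proof (AG y (op x be (op b de b)) (op x ga y) be de).
  pose proof (LI x (op b de b) (op y de (op x ga y)) be be).
  pose proof (AG (op y de (op x ga y)) b b be de).
  pose proof (LI y (op x ga y) b de de).
  pose proof (AG b (op b de (op x ga y)) y be de).
  pose proof (LI (op b de (op x ga y)) (op b de y) x be be).
  pose proof (AG (op x be (op b de y)) b (op x ga y) be de).
  intros. congruence.
Qed.

Theorem mainTheorem2 (S G : Type) (op : S -> G -> S -> S)
  (hS : inhabited S) (hG : inhabited G)
  (hAG : GammaAGss op) (hir : intra_regular op)
  (B : S -> Prop) (hB : bi_ideal op B \/ gen_bi_ideal op B) :
  set_eq (setG op (setG op B fullset) B) (set_inter B fullset) /\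
  set_eq (set_inter B fullset) B.
Proof.
  assert (hg : gen_bi_ideal op B) by (destruct hB as [[h _]|h]; exact h).
  destruct hg as [_ hsub].
  split; intro z; split.
  - intro h. split; [apply hsub; exact h | exact I].
  - intros [hz _]. destruct (@key S G op hAG hir z) as [s [g1 [g2 e]]].
    exists (op z g1 s), g2, z. repeat split; try assumption.
    exists z, g1, s. repeat split; assumption.
  - intros [h _]; exact h.
  - intro h; split; [exact h | exact I].
Qed.
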